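(* Let $q$ be a prime power and $F/\mathbb{F}_q$ an algebraic function field with full constant field $\mathbb{F}_q$ of genus $g\geq 2$. For $n\geq 0$ let $A_n$ be the number of effective divisors of degree $n$ of $F$, for $r\geq1$ let $B_r$ be the number of places of degree $r$ of $F$, let $\Sigma_1=\sum_{n=0}^{g-1}A_n$, let $\Delta_1=\{r: 1\leq r\leq g-1,\ B_r\geq 1\}$ and $\Delta_1'=\Delta_1\setminus\{1\}$. (1) Let $(m_r)_{r\in\Delta_1}$ be integers with $m_r\geq 0$ and $\sum_{r\in\Delta_1} r\,m_r\leq g-1$. Then $$\Sigma_1\geq\prod_{r\in\Delta_1}\binom{B_r+m_r}{m_r}.$$ (2) Suppose $B_1\geq 1$ and let $r_1,\dots,r_u$ be distinct elements of $\Delta_1'$. Then $$\Sigma_1\geq\binom{B_1+g-1}{g-1}+\sum_{i=1}^u\left(\binom{B_{r_i}+\lfloor\frac{g-1}{r_i}\rfloor}{\lfloor\frac{g-1}{r_i}\rfloor}-1\right)\binom{B_1+((g-1)\bmod r_i)}{(g-1)\bmod r_i}.$$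
   Context: $(g-1)\bmod r$ denotes the remainder of the Euclidean division of $g-1$ by $r$. *)

(* Defs.v *)
From HB Require Import structures.
From mathcomp Require Import all_boot all_order all_algebra.
From Stdlib Require List.
Set Implicit Arguments.
Unset Strict Implicit.
Unset Printing Implicit Defensive.
Import Order.TTheory GRing.Theory Num.Theory.
Local Open Scope ring_scope.

Definition counts (T : Type) (X : T -> Prop) (n : nat) : Prop :=
  exists f : 'I_n -> T,
    injective f /\ (forall i, X (f i)) /\ (forall x, X x -> exists i, f i = x).

Section FunctionField.
Variables (K : finFieldType) (F : fieldType) (iota : {rmorphism K -> F}).

Definition in_Kx (x y : F) : Prop :=
  exists p r : {poly K}, r != 0 /\
    y = (map_poly iota p).[x] / (map_poly iota r).[x].

Definition transcendental (x : F) : Prop :=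
  forall p : {poly K}, p != 0 -> (map_poly iota p).[x] != 0.

Definition is_function_field : Prop :=
  exists x : F, transcendental x /\
    exists s : seq F, forall y : F, exists c : 'I_(size s) -> F,
      (forall i, in_Kx x (c i)) /\ y = \sum_(i < size s) c i * s`_i.

Definition full_constant_field : Prop :=
  forall y : F, (exists p : {poly K}, p != 0 /\ root (map_poly iota p) y) ->
    exists c : K, y = iota c.

Definition valring (O : F -> Prop) : Prop :=
  (forall c : K, O (iota c)) /\
  (forall a b, O a -> O b -> O (a - b)) /\
  (forall a b, O a -> O b -> O (a * b)) /\
  (exists z, O z /\ ~ (exists c : K, z = iota c)) /\
  (exists z, ~ O z) /\
  (forall z, z != 0 -> O z \/ O z^-1).

Definition max_ideal (O : F -> Prop) (z : F) : Prop :=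
  O z /\ ~ (z != 0 /\ O z^-1).

Definition place_of (O P : F -> Prop) : Prop :=
  valring O /\ (forall z, P z <-> max_ideal O z).

Definition is_place (P : F -> Prop) : Prop := exists O, place_of O P.

(* deg P = r : the residue class field O/P has dimension r over K *)
Definition place_deg (P : F -> Prop) (r : nat) : Prop :=
  exists O, place_of O P /\
    exists e : 'I_r -> F, (forall i, O (e i)) /\
      (forall z, O z -> exists c : 'I_r -> K,
          P (z - \sum_(i < r) iota (c i) * e i)) /\
      (forall c : 'I_r -> K, P (\sum_(i < r) iota (c i) * e i) ->
          forall i, c i = 0).

Definition is_divisor (D : (F -> Prop) -> int) : Prop :=
  (forall P, D P != 0 -> is_place P) /\
  exists s : seq (F -> Prop), forall P, D P != 0 -> List.In P s.

Definition div_deg (D : (F -> Prop) -> int) (n : int) : Prop :=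
  exists (s : seq (F -> Prop)) (d : (F -> Prop) -> nat),
    List.NoDup s /\ (forall P, D P != 0 -> List.In P s) /\
    (forall P, List.In P s -> place_deg P (d P)) /\
    n = \sum_(P <- s) (d P)%:Z * D P.

(* v_P(z) >= - D(P) : with t a prime element of P, z * t^(D P) lies in O *)
Definition val_ge_neg (P : F -> Prop) (z : F) (k : int) : Prop :=
  exists O t, place_of O P /\ P t /\ t != 0 /\
    (forall w, P w -> O (w / t)) /\ O (z * t ^ k).

Definition LRR (D : (F -> Prop) -> int) (z : F) : Prop :=
  z = 0 \/ forall P, is_place P -> val_ge_neg P z (D P).

Definition dimL (D : (F -> Prop) -> int) (l : nat) : Prop :=
  exists e : 'I_l -> F, (forall i, LRR D (e i)) /\
    (forall c : 'I_l -> K, \sum_(i < l) iota (c i) * e i = 0 ->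
        forall i, c i = 0) /\
    (forall z, LRR D z -> exists c : 'I_l -> K,
        z = \sum_(i < l) iota (c i) * e i).

Definition is_genus (g : nat) : Prop :=
  (forall D n l, is_divisor D -> div_deg D n -> dimL D l ->
      n - l%:Z + 1 <= g%:Z) /\
  (exists D n l, is_divisor D /\ div_deg D n /\ dimL D l /\
      n - l%:Z + 1 = g%:Z).

Definition eff_div_of_deg (n : nat) (D : (F -> Prop) -> int) : Prop :=
  is_divisor D /\ (forall P, 0 <= D P) /\ div_deg D n%:Z.

Definition place_of_deg (r : nat) (P : F -> Prop) : Prop :=
  is_place P /\ place_deg P r.

End FunctionField.

(* Main.v *)
Require Import Defs.
From mathcomp Require Import all_boot all_order all_algebra.
From Stdlib Require Import ClassicalEpsilon Classical.
From Stdlib Require List.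
Set Implicit Arguments. Unset Strict Implicit. Unset Printing Implicit Defensive.
Import Order.TTheory GRing.Theory Num.Theory.

Definition incr (v : seq nat) := if v is x :: v' then x.+1 :: v' else [::].

Fixpoint V (b m : nat) {struct b} : seq (seq nat) :=
  match b with
  | 0 => [:: [::]]
  | b'.+1 => let fix W m := match m with
                | 0 => [:: nseq b'.+1 0]
                | m'.+1 => [seq 0 :: v | v <- V b' m] ++ map incr (W m')
                end in W m
  end.

Lemma V0 m : V 0 m = [:: [::]]. Proof. by []. Qed.
Lemma VS0 b : V b.+1 0 = [:: nseq b.+1 0]. Proof. by []. Qed.
Lemma VSS b m : V b.+1 m.+1 = [seq 0 :: v | v <- V b m.+1] ++ map incr (V b.+1 m).
Proof. by []. Qed.

Lemma V_size b m : size (V b m) = 'C(b + m, m).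
Proof.
elim: b m => [|b IH] m; first by rewrite V0 add0n binn.
elim: m => [|m IHm]; first by rewrite VS0 bin0.
rewrite VSS size_cat !size_map IH IHm.
by rewrite !addSn !addnS binS.
Qed.

Lemma V_mem b m v : v \in V b m -> size v = b /\ sumn v <= m.
Proof.
elim: b m v => [|b IH] m v; first by rewrite V0 inE => /eqP ->.
elim: m v => [|m IHm] v.
  rewrite VS0 inE => /eqP ->; rewrite size_nseq; split => //.
  by elim: b {IH} => [|b /= ->].
rewrite VSS mem_cat => /orP [/mapP [w hw ->]|/mapP [w hw ->]].
  by have [h1 h2] := IH _ _ hw; rewrite /= h1 add0n.
have [h1 h2] := IHm _ hw; case: w h1 h2 {hw} => [|x w] //= [->] h.
Qed.

Lemma V_uniq b m : uniq (V b m).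
Proof.
elim: b m => [|b IH] m //.
elim: m => [|m IHm] //.
rewrite VSS cat_uniq map_inj_uniq; last by move=> u w [].
rewrite IH andTb.
apply/andP; split.
  apply/hasPn => _ /mapP [w hw ->]; apply/mapP => [[u _]].
  have [h1 _] := V_mem hw; case: w hw h1 => [|x w] //= _ _ [].
rewrite map_inj_in_uniq // => u w hu hw.
have [h1 _] := V_mem hu; have [h2 _] := V_mem hw.
by case: u hu h1 => [|x u] //; case: w hw h2 => [|y w] // _ _ _ _ [-> ->].
Qed.

Lemma V_count0 b m : count (fun v => sumn v == 0) (V b m) = 1.
Proof.
elim: b m => [|b IH] m //.
elim: m => [|m IHm].
  by rewrite VS0 /= addn0; elim: b {IH} => [|b /= ->].
rewrite VSS count_cat !count_map.
rewrite (eq_count (a2 := fun v => sumn v == 0)) // IH.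
rewrite (eq_in_count (a2 := pred0)) ?count_pred0 // => w /V_mem [h _].
by case: w h.
Qed.

Definition V' b m := [seq w <- V b m | 0 < sumn w].

Lemma V'_size b m : size (V' b m) = 'C(b + m, m) - 1.
Proof.
rewrite size_filter -V_size -(count_predC (fun w => 0 < sumn w) (V b m)).
rewrite (eq_count (a1 := predC _) (a2 := fun v => sumn v == 0)) ?V_count0 ?addnK //.
by move=> w /=; rewrite lt0n negbK.
Qed.

Lemma cat_inj (v v' w w' : seq nat) : size v = size v' -> v ++ w = v' ++ w' ->
  v = v' /\ w = w'.
Proof. by move=> hs /eqP; rewrite eqseq_cat // => /andP [/eqP -> /eqP ->]. Qed.

Lemma sumn_nseq0 n : sumn (nseq n 0) = 0.
Proof. by elim: n => [|n /= ->]. Qed.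
Local Open Scope ring_scope.

Section Alg.
Variables (K : finFieldType) (F : fieldType) (iota : {rmorphism K -> F}).

Lemma vr0 O : valring iota O -> O 0.
Proof. by case=> h _; have := h 0; rewrite rmorph0. Qed.
Lemma vr1 O : valring iota O -> O 1.
Proof. by case=> h _; have := h 1; rewrite rmorph1. Qed.
Lemma vrB O a b : valring iota O -> O a -> O b -> O (a - b).
Proof. by case=> _ [h _]; apply: h. Qed.
Lemma vrM O a b : valring iota O -> O a -> O b -> O (a * b).
Proof. by case=> _ [_ [h _]]; apply: h. Qed.
Lemma vrD O a b : valring iota O -> O a -> O b -> O (a + b).
Proof.
move=> hv ha hb; have -> : a + b = a - (0 - b) by rewrite sub0r opprK.
by apply: vrB => //; apply: vrB => //; apply: vr0.
Qed.

Variables (O P : F -> Prop).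
Hypothesis hOP : place_of iota O P.

Lemma hv : valring iota O. Proof. by case: hOP. Qed.
Lemma Pdef z : P z <-> O z /\ ~ (z != 0 /\ O z^-1).
Proof. by case: hOP => _ h; apply: h. Qed.

Lemma PO z : P z -> O z. Proof. by move/Pdef => []. Qed.
Lemma P0 : P 0.
Proof. by apply/Pdef; split; [apply: vr0; apply: hv | case; rewrite eqxx]. Qed.

Lemma PM x y : P x -> O y -> P (y * x).
Proof.
move=> /Pdef [hx hnx] hy; apply/Pdef; split; first by apply: vrM => //; apply: hv.
case=> hyx hinv; apply: hnx; split.
  by apply: contraNneq hyx => ->; rewrite mulr0.
have -> : x^-1 = y * (y * x)^-1.
  have hy0 : y != 0 by apply: contraNneq hyx => ->; rewrite mul0r.
  by rewrite invfM mulrA mulfV // mul1r.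
by apply: vrM => //; apply: hv.
Qed.

Lemma PD x y : P x -> P y -> P (x + y).
Proof.
move=> hx hy.
have [->|x0] := eqVneq x 0; first by rewrite add0r.
have [->|y0] := eqVneq y 0; first by rewrite addr0.
have hvv := hv; case: (hvv) => _ [_ [_ [_ [_ hval]]]].
have : y / x != 0 by rewrite mulf_neq0 // invr_eq0.
move/hval => [h|h].
  have -> : x + y = (1 + y / x) * x by rewrite mulrDl mul1r mulfVK.
  by apply: PM => //; apply: vrD => //; apply: vr1.
have -> : x + y = (x / y + 1) * y by rewrite mulrDl mul1r mulfVK.
apply: PM => //; apply: vrD => //; last by apply: vr1.
by move: h; rewrite invf_div.
Qed.

Lemma Psum (I : Type) (r : seq I) (Q : pred I) (f : I -> F) :
  (forall i, Q i -> P (f i)) -> P (\sum_(i <- r | Q i) f i).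
Proof. by move=> h; apply: big_ind => //; [apply: P0 | apply: PD]. Qed.

Lemma Ochar z : O z <-> (z = 0 \/ ~ P z^-1).
Proof.
split.
  move=> hz; have [->|z0] := eqVneq z 0; first by left.
  right => /Pdef [_ []]; split; first by rewrite invr_eq0.
  by rewrite invrK.
case=> [->|hn]; first by apply: vr0; apply: hv.
have [->|z0] := eqVneq z 0; first by apply: vr0; apply: hv.
have hvv := hv; case: (hvv) => _ [_ [_ [_ [_ hval]]]].
case: (hval z z0) => // h.
apply: NNPP => hO; apply: hn; apply/Pdef; split => //.
by case; rewrite invrK.
Qed.

End Alg.

Lemma Ouniq (K : finFieldType) (F : fieldType) (iota : {rmorphism K -> F}) O1 O2 P :
  place_of iota O1 P -> place_of iota O2 P -> forall z, O1 z -> O2 z.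
Proof. by move=> h1 h2 z /(Ochar h1) /(Ochar h2). Qed.

Section Deg.
Variables (K : finFieldType) (F : fieldType) (iota : {rmorphism K -> F}).

Lemma deg_le O P r r' (e : 'I_r -> F) (e' : 'I_r' -> F) :
  place_of iota O P ->
  (forall z, O z -> exists c : 'I_r -> K, P (z - \sum_(i < r) iota (c i) * e i)) ->
  (forall j, O (e' j)) ->
  (forall c : 'I_r' -> K, P (\sum_(j < r') iota (c j) * e' j) -> forall j, c j = 0) ->
  (r' <= r)%N.
Proof.
move=> hOP hspan hO' hind.
rewrite leqNgt; apply/negP => hlt.
have hc : forall j : 'I_r', exists c : 'I_r -> K, P (e' j - \sum_(i < r) iota (c i) * e i).
  by move=> j; apply: hspan.
pose C j := proj1_sig (constructive_indefinite_description _ (hc j)).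
have hC j : P (e' j - \sum_(i < r) iota (C j i) * e i).
  exact: (proj2_sig (constructive_indefinite_description _ (hc j))).
pose M : 'M[K]_(r', r) := \matrix_(j, i) C j i.
have : kermx M != 0.
  rewrite kermx_eq0 /row_free; apply/negP => /eqP h.
  by move: (rank_leq_col M); rewrite h leqNgt hlt.
case/matrix0Pn => j0 [k0 hk0].
pose c (j : 'I_r') := kermx M j0 j.
have hsum : P (\sum_(j < r') iota (c j) * e' j).
  have -> : \sum_(j < r') iota (c j) * e' j =
     \sum_(j < r') iota (c j) * (e' j - \sum_(i < r) iota (C j i) * e i).
    have h0 : \sum_(j < r') iota (c j) * (\sum_(i < r) iota (C j i) * e i) = 0.
      rewrite (eq_bigr (fun j => \sum_(i < r) iota (c j * C j i) * e i)); last first.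
        by move=> j _; rewrite mulr_sumr; apply: eq_bigr => i _; rewrite rmorphM mulrA.
      rewrite exchange_big /=; apply: big1 => i _.
      rewrite -mulr_suml -rmorph_sum.
      have : (kermx M *m M) j0 i = 0 by rewrite mulmx_ker mxE.
      rewrite mxE => h.
      have -> : \sum_(j < r') c j * C j i = \sum_(j < r') kermx M j0 j * M j i.
        by apply: eq_bigr => j _; rewrite /M mxE.
      by rewrite h rmorph0 mul0r.
    symmetry; rewrite (eq_bigr (fun j => iota (c j) * e' j - iota (c j) * (\sum_(i < r) iota (C j i) * e i))); last first.
      by move=> j _; rewrite mulrBr.
    by rewrite sumrB h0 subr0.
  apply: (Psum hOP) => j _; apply: (PM hOP) => //.
  by case: (hv hOP) => h _; apply: h.
by move: hk0; rewrite (hind _ hsum k0 : kermx M j0 k0 = 0) eqxx.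
Qed.

Lemma place_deg_uniq P r r' : place_deg iota P r -> place_deg iota P r' -> r = r'.
Proof.
move=> [O1 [h1 [e1 [hO1 [hs1 hi1]]]]] [O2 [h2 [e2 [hO2 [hs2 hi2]]]]].
apply/eqP; rewrite eqn_leq; apply/andP; split.
  apply: (deg_le h2 hs2 _ hi1) => j; exact: (Ouniq h1 h2).
apply: (deg_le h1 hs1 _ hi2) => j; exact: (Ouniq h2 h1).
Qed.
End Deg.

Local Open Scope ring_scope.
Section Div.
Variables (K : finFieldType) (F : fieldType) (iota : {rmorphism K -> F}).
Notation PL := (F -> Prop).

Definition pdec (P Q : PL) : bool :=
  if excluded_middle_informative (P = Q) then true else false.
Lemma pdecT P : pdec P P. Proof. by rewrite /pdec; case: excluded_middle_informative. Qed.
Lemma pdecF P Q : P <> Q -> pdec P Q = false.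
Proof. by rewrite /pdec; case: excluded_middle_informative. Qed.
Lemma pdecP P Q : pdec P Q -> P = Q.
Proof. by rewrite /pdec; case: excluded_middle_informative. Qed.

Fixpoint Dn (pds : seq (PL * nat)) (c : seq nat) (P : PL) : nat :=
  match pds, c with
  | x :: pds', a :: c' => ((if pdec P x.1 then a else 0) + Dn pds' c' P)%N
  | _, _ => 0%N end.
Fixpoint dd (pds : seq (PL * nat)) (P : PL) : nat :=
  match pds with
  | x :: pds' => ((if pdec P x.1 then x.2 else 0) + dd pds' P)%N
  | [::] => 0%N end.
Fixpoint degc (pds : seq (PL * nat)) (c : seq nat) : nat :=
  match pds, c with
  | x :: pds', a :: c' => (x.2 * a + degc pds' c')%N
  | _, _ => 0%N end.

Definition Dc pds c (P : PL) : int := (Dn pds c P)%:Z.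

Lemma In_map_fst (pds : seq (PL * nat)) P :
  List.In P (map fst pds) <-> exists x, List.In x pds /\ P = x.1.
Proof.
elim: pds => [|x pds IH] /=; first by split=> // [[x []]].
split.
  case=> [e|h]; first by exists x; split; [left|rewrite e].
  by move: (proj1 IH h) => [y [hy ->]]; exists y; auto.
case=> y [[e|hy] e']; first by left; rewrite e'  e.
by right; apply: (proj2 IH); exists y.
Qed.

Lemma Dn_out pds c P : ~ List.In P (map fst pds) -> Dn pds c P = 0%N.
Proof.
elim: pds c => [|x pds IH] [|a c] //= hn.
rewrite pdecF ?IH //; first by move=> h; apply: hn; right.
by move=> h; apply: hn; left.
Qed.
Lemma dd_out pds P : ~ List.In P (map fst pds) -> dd pds P = 0%N.
Proof.
elim: pds => [|x pds IH] //= hn.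
rewrite pdecF ?IH //; first by move=> h; apply: hn; right.
by move=> h; apply: hn; left.
Qed.

Lemma Dn_supp pds c P : Dn pds c P <> 0%N -> List.In P (map fst pds).
Proof. by move=> h; apply: NNPP => hn; apply: h; apply: Dn_out. Qed.

Lemma dd_in pds x : List.NoDup (map fst pds) -> List.In x pds -> dd pds x.1 = x.2.
Proof.
elim: pds => [|y pds IH] //= hnd; inversion hnd; subst.
case=> [<-|hx]; first by rewrite pdecT dd_out ?addn0.
rewrite pdecF ?IH //.
move=> e; apply: H1; rewrite -e; apply/In_map_fst; by exists x.
Qed.

Lemma In_zip1 (A B : Type) (s : seq A) (t : seq B) x a :
  List.In (x, a) (zip s t) -> List.In x s.
Proof.
elim: s t => [|y s IH] [|b t] //= [[-> _]|h]; first by left.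
by right; apply: IH h.
Qed.

Lemma Dn_in pds c x a : List.NoDup (map fst pds) ->
  List.In (x, a) (zip pds c) -> Dn pds c x.1 = a.
Proof.
elim: pds c => [|y pds IH] [|b c] //= hnd; inversion hnd; subst.
case=> [[<- <-]|hx]; first by rewrite pdecT Dn_out // addn0.
rewrite pdecF ?(IH c) //.
move=> e; apply: H1; rewrite -e; apply/In_map_fst; exists x; split => //.
exact: In_zip1 hx.
Qed.

Lemma sum_gen pds c (d' D' : PL -> nat) : size c = size pds ->
  (forall x a, List.In (x, a) (zip pds c) -> d' x.1 = x.2 /\ D' x.1 = a) ->
  (\sum_(P <- map fst pds) (d' P)%:Z * (D' P)%:Z)%R = (degc pds c)%:Z.
Proof.
elim: pds c => [|y pds IH] [|b c] //=; first by rewrite big_nil.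
case=> hs h; rewrite big_cons (IH c) //; last by move=> x a hx; apply: h; right.
have [-> ->] := h y b (or_introl erefl).
by rewrite PoszD PoszM.
Qed.

Lemma Dn_inj pds c c' : List.NoDup (map fst pds) ->
  size c = size pds -> size c' = size pds ->
  (forall P, Dn pds c P = Dn pds c' P) -> c = c'.
Proof.
elim: pds c c' => [|y pds IH] [|b c] [|b' c'] //=.
move=> hnd [hs] [hs'] h; inversion hnd; subst.
have hb : b = b'.
  by have := h y.1; rewrite pdecT !Dn_out // !addn0.
subst; congr (_ :: _); apply: IH => // P.
have := h P; case: (pdec P y.1) => /=; last by [].
by move/eqP; rewrite eqn_add2l => /eqP.
Qed.

Hypothesis dummy : True.

Lemma Dc_eff pds c : List.NoDup (map fst pds) -> size c = size pds ->
  (forall x, List.In x pds -> place_of_deg iota x.2 x.1) ->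
  eff_div_of_deg iota (degc pds c) (Dc pds c).
Proof.
move=> hnd hs hpl; split; [split|split].
- move=> P hP; have /In_map_fst [x [hx ->]] : List.In P (map fst pds).
    by apply: (@Dn_supp _ c) => h; move: hP; rewrite /Dc h.
  by case: (hpl x hx).
- exists (map fst pds) => P hP; apply: (@Dn_supp _ c) => h; move: hP; by rewrite /Dc h.
- by move=> P; rewrite /Dc.
exists (map fst pds), (dd pds); split => //; split.
  by move=> P hP; apply: (@Dn_supp _ c) => h; move: hP; rewrite /Dc h.
split.
  move=> P /In_map_fst [x [hx ->]]; rewrite dd_in //; by case: (hpl x hx).
symmetry; apply: (sum_gen (d' := dd pds) (D' := Dn pds c)) => //.
move=> x a hxa; split; last exact: Dn_in hxa.
by apply: dd_in => //; apply: In_zip1 hxa.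
Qed.

End Div.

Local Close Scope ring_scope.
Section Count.
Variables (K : finFieldType) (F : fieldType) (iota : {rmorphism K -> F}).
Variables (g : nat) (A : nat -> nat).
Hypothesis hA : forall n : nat, counts (eff_div_of_deg iota n) (A n).

Lemma hE n : exists E : nat -> ((F -> Prop) -> int),
  forall D, eff_div_of_deg iota n D -> exists k, (k < A n)%N /\ E k = D.
Proof.
have [f [_ [_ hs]]] := hA n.
exists (fun k => oapp f (fun _ => 0) (insub k)) => D /hs [i <-].
by exists (val i); rewrite valK ltn_ord.
Qed.

Lemma count_main pds (hnd : List.NoDup (map fst pds))
  (hpl : forall x, List.In x pds -> place_of_deg iota x.2 x.1)
  (Cs : seq (seq nat)) : uniq Cs ->
  (forall c, c \in Cs -> size c = size pds /\ (degc pds c < g)%N) ->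
  (size Cs <= \sum_(0 <= n < g) A n)%N.
Proof.
move=> hu hC.
pose E n := proj1_sig (constructive_indefinite_description _ (hE n)).
have hEs n := proj2_sig (constructive_indefinite_description _ (hE n)).
pose Q c := exists k, (k < A (degc pds c))%N /\ E (degc pds c) k = Dc pds c.
have hQ c : c \in Cs -> Q c.
  move=> hc; have [hs _] := hC c hc.
  exact: (hEs _ _ (Dc_eff hnd hs hpl)).
have hex c : exists k, c \in Cs -> (k < A (degc pds c))%N /\ E (degc pds c) k = Dc pds c.
  case: (boolP (c \in Cs)) => hc; last by exists 0%N.
  by have [k hk] := hQ c hc; exists k.
pose idx c := proj1_sig (constructive_indefinite_description _ (hex c)).
have hidx c : c \in Cs -> (idx c < A (degc pds c))%N /\ E (degc pds c) (idx c) = Dc pds c.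
  exact: (proj2_sig (constructive_indefinite_description _ (hex c))).
pose h c := (degc pds c, idx c).
have -> : size Cs = size (map h Cs) by rewrite size_map.
have -> : (\sum_(0 <= n < g) A n = size [seq (n, k) | n <- seq.iota 0 g, k <- seq.iota 0 (A n)])%N.
  rewrite size_allpairs_dep /index_iota subn0 sumnE big_map.
  by apply: eq_bigr => n _; rewrite seq.size_iota.
apply: uniq_leq_size.
  rewrite map_inj_in_uniq // => c c' hc hc' [e1 e2].
  have [hs _] := hC c hc; have [hs' _] := hC c' hc'.
  apply: (Dn_inj hnd hs hs') => P.
  have [_ h1] := hidx c hc; have [_ h2] := hidx c' hc'.
  rewrite e1 e2 in h1; rewrite h1 in h2.
  by have := congr1 (fun D => D P) h2; rewrite /Dc => [[]].
move=> _ /mapP [c hc ->]; rewrite /h.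
apply: allpairs_f_dep; first by rewrite seq.mem_iota /=; case: (hC c hc).
by rewrite seq.mem_iota /=; case: (hidx c hc).
Qed.
End Count.

Lemma In_mem (T : eqType) (s : seq T) x : List.In x s <-> x \in s.
Proof.
elim: s => [|y s IH] //=; rewrite in_cons; split.
  by case=> [->|/IH ->]; rewrite ?eqxx ?orbT.
by case/orP => [/eqP ->|/IH]; auto.
Qed.

Lemma In_map (A B : Type) (f : A -> B) s y :
  List.In y (map f s) <-> exists x, List.In x s /\ y = f x.
Proof.
elim: s => [|x s IH] /=; first by split=> // [[x []]].
split.
  case=> [e|h]; first by exists x; split; [left|rewrite e].
  by move: (proj1 IH h) => [z [hz ->]]; exists z; auto.
case=> z [[e|hz] e']; first by left; rewrite e' e.
by right; apply: (proj2 IH); exists z.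
Qed.

Lemma NoDup_map_nat (A : Type) (f : nat -> A) (s : seq nat) :
  uniq s -> {in s &, forall i j, f i = f j -> i = j} -> List.NoDup (map f s).
Proof.
elim: s => [|x s IH] /=; first by constructor.
case/andP => hx hu hinj; constructor.
  case/In_map => y [/In_mem hy e]; move: hx.
  by rewrite (hinj x y) ?hy // ?inE ?eqxx ?hy ?orbT.
apply: IH => // i j hi hj; apply: hinj; by rewrite inE ?hi ?hj orbT.
Qed.

Section Main.
Variables (K : finFieldType) (F : fieldType) (iota : {rmorphism K -> F}).
Variables (B : nat -> nat) (fr : nat -> nat -> (F -> Prop)).
Hypothesis hfr : forall r, 0 < r ->
  (forall i, i < B r -> place_of_deg iota r (fr r i)) /\
  (forall i j, i < B r -> j < B r -> fr r i = fr r j -> i = j).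

Definition blk r := [seq (fr r i, r) | i <- seq.iota 0 (B r)].
Fixpoint pdsl rs := if rs is r :: rs' then blk r ++ pdsl rs' else [::].

Lemma size_blk r : size (blk r) = B r.
Proof. by rewrite size_map size_iota. Qed.

Lemma degc_cat (p1 p2 : seq ((F -> Prop) * nat)) v w : size v = size p1 ->
  degc (p1 ++ p2) (v ++ w) = degc p1 v + degc p2 w.
Proof. by elim: p1 v => [|x p1 IH] [|a v] //= [/IH ->]; rewrite addnA. Qed.

Lemma degc_blk r v : size v = B r -> degc (blk r) v = r * sumn v.
Proof.
have gen (s : seq nat) w : size w = size s -> degc [seq (fr r i, r) | i <- s] w = r * sumn w.
  elim: s w => [|i s IH] [|a w] //=; first by rewrite muln0.
  by case=> /IH ->; rewrite mulnDr.
by move=> h; apply: gen; rewrite size_iota.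
Qed.

Lemma degc_zero (p : seq ((F -> Prop) * nat)) n : degc p (nseq n 0) = 0.
Proof. by elim: p n => [|x p IH] [|n] //=; rewrite IH muln0. Qed.

Lemma In_pdsl rs x : List.In x (pdsl rs) ->
  x.2 \in rs /\ exists i, i < B x.2 /\ x.1 = fr x.2 i.
Proof.
elim: rs => [|r rs IH] //= hx.
case: (List.in_app_or _ _ _ hx) => [{}hx|/IH [h1 h2]]; last first.
  by rewrite inE h1 orbT.
move: hx.
case/In_map => i [/In_mem]; rewrite mem_iota add0n /= => hi ->.
by rewrite inE eqxx; split => //; exists i.
Qed.

Lemma pl_pdsl rs : all (fun r => 0 < r) rs ->
  forall x, List.In x (pdsl rs) -> place_of_deg iota x.2 x.1.
Proof.
move=> /allP hpos x /In_pdsl [hr [i [hi ->]]].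
by apply: (proj1 (hfr (hpos _ hr))).
Qed.

Lemma NoDup_pdsl rs : uniq rs -> all (fun r => 0 < r) rs ->
  List.NoDup (map fst (pdsl rs)).
Proof.
elim: rs => [|r rs IH] /=; first by constructor.
case/andP => hr hu /andP [hr0 hpos]; rewrite map_cat.
apply: List.NoDup_app; first 2 last.
- move=> P /In_map [x [hx ->]] /In_map [y [hy e]].
  move: hx => /In_map [i [/In_mem]]; rewrite mem_iota add0n /= => hi ex.
  have [hy2 [j [hj ey]]] := In_pdsl hy.
  have hyp := pl_pdsl hpos hy.
  have hxp := proj1 (hfr hr0) i hi.
  have : r = y.2.
    apply: (place_deg_uniq (iota := iota) (P := x.1)); first by rewrite ex /=; case: hxp.
    by rewrite e; case: hyp.
  by move=> er; move: hr; rewrite er hy2.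
- rewrite /blk -map_comp; apply: NoDup_map_nat; first exact: iota_uniq.
  move=> i j; rewrite !mem_iota !add0n /= => hi hj.
  exact: (proj2 (hfr hr0)).
- exact: IH.
Qed.

Fixpoint Cfg (m : nat -> nat) rs : seq (seq nat) :=
  if rs is r :: rs' then [seq v ++ w | v <- V (B r) (m r), w <- Cfg m rs'] else [:: [::]].

Lemma Cfg_size m rs : size (Cfg m rs) = \prod_(r <- rs) 'C(B r + m r, m r).
Proof.
elim: rs => [|r rs IH] /=; first by rewrite big_nil.
by rewrite size_allpairs IH V_size big_cons.
Qed.

Lemma Cfg_mem m rs c : c \in Cfg m rs ->
  size c = size (pdsl rs) /\ degc (pdsl rs) c <= \sum_(r <- rs) r * m r.
Proof.
elim: rs c => [|r rs IH] c /=; first by rewrite inE => /eqP ->; rewrite big_nil.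
case/allpairsP => [[v w] [/= hv hw ->]].
have [s1 h1] := V_mem hv; have [s2 h2] := IH _ hw.
rewrite !size_cat s1 s2 size_blk; split => //.
rewrite degc_cat ?size_blk // degc_blk // big_cons.
by apply: leq_add => //; apply: leq_mul.
Qed.

Lemma Cfg_uniq m rs : uniq (Cfg m rs).
Proof.
elim: rs => [|r rs IH] //=.
apply: allpairs_uniq => //; first exact: V_uniq.
move=> [v w] [v' w'] /allpairsP [[a b] [/= ha hb [-> ->]]]
  /allpairsP [[a' b'] [/= ha' hb' [-> ->]]] /= e.
have [s1 _] := V_mem ha; have [s1' _] := V_mem ha'.
by have [-> ->] := cat_inj (etrans s1 (esym s1')) e.
Qed.

Variable g : nat.
Definition kq r := (g - 1) %/ r.
Definition sq r := (g - 1) %% r.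

Fixpoint Tail rs : seq (nat * seq nat) :=
  if rs is r :: rs' then
    [seq (sq r, w ++ nseq (size (pdsl rs')) 0) | w <- V' (B r) (kq r)] ++
    [seq (p.1, nseq (B r) 0 ++ p.2) | p <- Tail rs']
  else [::].

Lemma V'_mem b k w : w \in V' b k -> [/\ size w = b, sumn w <= k & 0 < sumn w].
Proof. by rewrite mem_filter => /andP [h /V_mem [-> ->]]. Qed.

Lemma Tail_mem rs p : p \in Tail rs ->
  [/\ size p.2 = size (pdsl rs), 0 < sumn p.2 & p.1 + degc (pdsl rs) p.2 <= g - 1].
Proof.
elim: rs p => [|r rs IH] p //=.
rewrite mem_cat => /orP [/mapP [w hw ->]|/mapP [q hq ->]] /=.
  have [s1 h1 h2] := V'_mem hw.
  rewrite !size_cat size_nseq s1 size_blk sumn_cat sumn_nseq0 addn0.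
  split => //; rewrite degc_cat ?size_blk // degc_blk // degc_zero addn0.
  rewrite [X in _ <= X](divn_eq (g - 1) r) -/(kq r) -/(sq r) [sq r + _]addnC leq_add2r mulnC.
  by apply: leq_mul.
have [s1 h1 h2] := IH _ hq.
rewrite !size_cat size_nseq s1 size_blk sumn_cat sumn_nseq0 add0n.
split => //; rewrite degc_cat ?size_blk ?size_nseq // degc_blk ?size_nseq //.
by rewrite sumn_nseq0 muln0 add0n.
Qed.

Lemma Tail_uniq rs : uniq (map snd (Tail rs)).
Proof.
elim: rs => [|r rs IH] //=.
rewrite map_cat cat_uniq -!map_comp; apply/and3P; split.
- rewrite map_inj_in_uniq; first by rewrite filter_uniq // V_uniq.
  move=> w w' hw hw' /= e.
  have [s1 _ _] := V'_mem hw; have [s1' _ _] := V'_mem hw'.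
  by have [] := cat_inj (etrans s1 (esym s1')) e.
- apply/hasPn => _ /mapP [q hq ->] /=; apply/negP => /mapP [w hw e].
  have [s1 _ h] := V'_mem hw.
  have [e1 _] := cat_inj (etrans (size_nseq _ _) (esym s1)) e.
  by move: h; rewrite -e1 sumn_nseq0.
- rewrite (map_comp (fun t => nseq (B r) 0 ++ t)) map_inj_uniq // => t t'.
  by move=> e; have [] := cat_inj (erefl (size (nseq (B r) 0))) e.
Qed.

Lemma sum_const_seq (T : Type) (s : seq T) c : \sum_(x <- s) c = size s * c.
Proof. by elim: s => [|x s IH]; rewrite ?big_nil ?big_cons ?IH // mulSn. Qed.

Lemma Tail_sum rs : \sum_(p <- Tail rs) 'C(B 1 + p.1, p.1) =
  \sum_(r <- rs) ('C(B r + kq r, kq r) - 1) * 'C(B 1 + sq r, sq r).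
Proof.
elim: rs => [|r rs IH] /=; first by rewrite !big_nil.
by rewrite big_cat !big_map /= IH big_cons sum_const_seq V'_size.
Qed.

Definition Cs2 rs := [seq v ++ nseq (size (pdsl rs)) 0 | v <- V (B 1) (g - 1)] ++
  flatten [seq [seq v ++ p.2 | v <- V (B 1) p.1] | p <- Tail rs].

Lemma Cs2_size rs : size (Cs2 rs) =
  'C(B 1 + (g - 1), g - 1) + \sum_(p <- Tail rs) 'C(B 1 + p.1, p.1).
Proof.
rewrite /Cs2 size_cat size_map V_size size_flatten /shape -map_comp sumnE big_map.
by congr (_ + _); apply: eq_bigr => p _ /=; rewrite size_map V_size.
Qed.

Lemma Cs2_mem rs c : c \in Cs2 rs ->
  size c = size (pdsl (1 :: rs)) /\ degc (pdsl (1 :: rs)) c <= g - 1.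
Proof.
rewrite mem_cat => /orP [/mapP [v hv ->]|/flattenP [s /mapP [p hp ->] /mapP [v hv ->]]] /=.
  have [s1 h1] := V_mem hv.
  rewrite !size_cat s1 size_nseq size_blk; split => //.
  by rewrite degc_cat ?size_blk // degc_blk // degc_zero mul1n addn0.
have [s1 h1] := V_mem hv; have [s2 h2 h3] := Tail_mem hp.
rewrite !size_cat s1 s2 size_blk; split => //.
rewrite degc_cat ?size_blk // degc_blk // mul1n.
by apply: leq_trans h3; rewrite leq_add2r.
Qed.

Lemma flat_uniq (W : nat -> seq (seq nat)) b (s : seq (nat * seq nat)) :
  (forall k v, v \in W k -> size v = b) -> (forall k, uniq (W k)) ->
  uniq (map snd s) -> uniq (flatten [seq [seq v ++ p.2 | v <- W p.1] | p <- s]).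
Proof.
move=> hW hu; elim: s => [|p s IH] //= /andP [hp hs].
rewrite cat_uniq IH // andbT; apply/andP; split.
  rewrite map_inj_in_uniq // => v v' hv hv' e.
  by have [] := cat_inj (etrans (hW _ _ hv) (esym (hW _ _ hv'))) e.
apply/hasPn => _ /flattenP [t /mapP [q hq ->] /mapP [v hv ->]].
apply/negP => /mapP [v' hv' e].
have [_ e2] := cat_inj (etrans (hW _ _ hv) (esym (hW _ _ hv'))) e.
by move: hp; rewrite -e2 map_f.
Qed.

Lemma Cs2_uniq rs : uniq (Cs2 rs).
Proof.
rewrite /Cs2 cat_uniq; apply/and3P; split.
- rewrite map_inj_in_uniq ?V_uniq // => v v' hv hv' e.
  by have [] := cat_inj (etrans (proj1 (V_mem hv)) (esym (proj1 (V_mem hv')))) e.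
- apply/hasPn => _ /flattenP [t /mapP [q hq ->] /mapP [v hv ->]].
  apply/negP => /mapP [v' hv' e].
  have [_ h _] := Tail_mem hq.
  have [_ e2] := cat_inj (etrans (proj1 (V_mem hv)) (esym (proj1 (V_mem hv')))) e.
  by move: h; rewrite e2 sumn_nseq0.
- apply: (flat_uniq (b := B 1)); [by move=> k v /V_mem [] | exact: V_uniq | exact: Tail_uniq].
Qed.

End Main.

Theorem theorem3p4 (K : finFieldType) (F : fieldType)
    (iota : {rmorphism K -> F})
    (hF : is_function_field iota) (hK : full_constant_field iota)
    (g : nat) (hg : is_genus iota g) (hg2 : (2 <= g)%N)
    (A B : nat -> nat)
    (hA : forall n : nat, counts (eff_div_of_deg iota n) (A n))
    (hB : forall r : nat, (0 < r)%N -> counts (place_of_deg iota r) (B r)) :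
  let Sigma1 := (\sum_(0 <= n < g) A n)%N in
  (forall m : nat -> nat,
      (\sum_(1 <= r < g | (0 < B r)%N) r * m r <= g - 1)%N ->
      (\prod_(1 <= r < g | (0 < B r)%N) 'C(B r + m r, m r) <= Sigma1)%N)
  /\
  ((0 < B 1)%N -> forall rs : seq nat, uniq rs ->
      (forall r, r \in rs -> [&& 2 <= r, r <= g - 1 & 0 < B r]%N) ->
      ('C(B 1 + (g - 1), g - 1)
       + \sum_(r <- rs) ('C(B r + (g - 1) %/ r, (g - 1) %/ r) - 1)
                        * 'C(B 1 + (g - 1) %% r, (g - 1) %% r)
       <= Sigma1)%N).
Proof.
move=> Sigma1.
have hfr_ex : forall r, exists f : nat -> (F -> Prop), 0 < r ->
    (forall i, i < B r -> place_of_deg iota r (f i)) /\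
    (forall i j, i < B r -> j < B r -> f i = f j -> i = j).
  move=> r; case: (posnP r) => [->|hr]; first by exists (fun _ _ => False).
  have [e [einj [ep _]]] := hB r hr.
  exists (fun i => oapp e (fun _ => False) (insub i)) => _; split.
    by move=> i hi; rewrite insubT /=; apply: ep.
  move=> i j hi hj; rewrite !insubT /= => /einj.
  by move/(congr1 val).
pose fr r := proj1_sig (constructive_indefinite_description _ (hfr_ex r)).
have hfr r : 0 < r -> (forall i, i < B r -> place_of_deg iota r (fr r i)) /\
    (forall i j, i < B r -> j < B r -> fr r i = fr r j -> i = j).
  exact: (proj2_sig (constructive_indefinite_description _ (hfr_ex r))).
have hg1 : g - 1 < g by rewrite ltn_subrL; apply: leq_trans hg2.
split.
  move=> m hm.
  pose rs := [seq r <- index_iota 1 g | 0 < B r].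
  have hu : uniq rs by rewrite filter_uniq // iota_uniq.
  have hpos : all (fun r => 0 < r) rs.
    by apply/allP => r; rewrite mem_filter mem_iota => /and3P [].
  rewrite -big_filter -/rs -(Cfg_size B m rs).
  apply: (count_main hA (NoDup_pdsl hfr hu hpos) (pl_pdsl hfr hpos) (Cfg_uniq B m rs)).
  move=> c /(Cfg_mem fr) [hs hd]; split => //.
  apply: leq_ltn_trans hg1; apply: leq_trans hd _.
  by rewrite big_filter.
move=> hB1 rs hu hrs.
have hu' : uniq (1 :: rs).
  rewrite /= hu andbT; apply/negP => /hrs /and3P [] //.
have hpos : all (fun r => 0 < r) (1 :: rs).
  by apply/allP => r; rewrite inE => /orP [/eqP ->|/hrs /and3P [h _ _]] //; apply: leq_trans h.
have := Tail_sum B fr g rs; rewrite /kq /sq => <-.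
rewrite -(Cs2_size B fr g rs).
apply: (count_main hA (NoDup_pdsl hfr hu' hpos) (pl_pdsl hfr hpos) (Cs2_uniq B fr g rs)).
move=> c /(Cs2_mem (fr := fr)) [hs hd]; split => //.
exact: leq_ltn_trans hg1.
Qed.
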